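(* Let $H=(V,E)$ be a graph, $\ell\ge1$ an integer, and let $G$ be $\ell$-suspended over $H$. Then for any two vertices $x,y\in V$ and any $i\in\{0,\dots,\ell\}$ we have $d_G((x,0),(y,i))=d_G((x,\ell),(y,\ell-i))=d_H(x,y)+i$.
   Context: $d_G$ denotes graph distance (length of a shortest path) in $G$. $P_\ell$ is the path on $0,1,\dots,\ell$ and $H\times P_\ell$ is the Cartesian product (vertex set $V\times\{0,\dots,\ell\}$, with $(x,i)\sim(y,j)$ iff ($\{x,y\}\in E$ and $i=j$) or ($x=y$ and $|i-j|=1$)). A graph $G$ is $\ell$-suspended over $H$ if $G$ is a spanning subgraph of $H\times P_\ell$ that contains all edges $\{(x,i),(x,i+1)\}$ ($x\in V$, $0\le i<\ell$) and all edges $\{(x,0),(y,0)\}$ and $\{(x,\ell),(y,\ell)\}$ for $\{x,y\}\in E$. *)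

(* Defs.v *)
From Stdlib Require Import ClassicalEpsilon.
From mathcomp Require Import all_boot.
Set Implicit Arguments. Unset Strict Implicit. Unset Printing Implicit Defensive.

Definition walkb (T : finType) (e : rel T) (x y : T) (n : nat) : bool :=
  [exists p : n.-tuple T, path e x p && (last x p == y)].

(* Graph distance: Some (length of a shortest walk), or None (= infinity)
   if y is unreachable from x. *)
Definition dist (T : finType) (e : rel T) (x y : T) : option nat :=
  match excluded_middle_informative (exists n, walkb e x y n) with
  | left H => Some (ex_minn H)
  | right _ => None
  end.

Definition simple_graph (T : finType) (e : rel T) : Prop :=
  symmetric e /\ irreflexive e.

Definition cartP (V : finType) (eH : rel V) (l : nat) : rel (V * 'I_l.+1) :=
  fun u v => ((u.2 == v.2) && eH u.1 v.1)
          || ((u.1 == v.1) && ((u.2.+1 == v.2 :> nat) || (v.2.+1 == u.2 :> nat))).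

Arguments cartP {V} eH l.

Definition suspended (V : finType) (eH : rel V) (l : nat)
    (eG : rel (V * 'I_l.+1)) : Prop :=
  [/\ symmetric eG,
      subrel eG (cartP eH l),
      (forall (x : V) (i j : 'I_l.+1), j = i.+1 :> nat -> eG (x, i) (x, j)),
      (forall x y : V, eH x y -> eG (x, ord0) (y, ord0)) &
      (forall x y : V, eH x y -> eG (x, ord_max) (y, ord_max))].

Arguments suspended {V} eH l eG.

(* Main.v *)
Require Import Defs.
From mathcomp Require Import all_boot.
From mathcomp Require Import zify.
From Stdlib Require Import ClassicalEpsilon.

Lemma walkbP (T : finType) (e : rel T) x y n :
  walkb e x y n <-> exists p : seq T, [/\ size p = n, path e x p & last x p = y].
Proof.
split.
  move/existsP=> [p /andP [Hp /eqP Hl]]; exists p; split=> //; exact: size_tuple.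
move=> [p [Hs Hp Hl]]; have Hs' : size p == n by apply/eqP.
apply/existsP; exists (Tuple Hs'); rewrite /= Hp Hl eqxx //.
Qed.

Lemma distE_some (T : finType) (e : rel T) x y d :
  walkb e x y d -> (forall n, walkb e x y n -> d <= n) -> dist e x y = Some d.
Proof.
move=> Hd Hmin; rewrite /dist; case: excluded_middle_informative => [H|H];
  last by exfalso; apply: H; exists d.
congr Some; case: ex_minnP => m Hm Hm'.
by apply/eqP; rewrite eqn_leq Hm' // Hmin.
Qed.

Lemma distE_none (T : finType) (e : rel T) x y :
  (forall n, ~~ walkb e x y n) -> dist e x y = None.
Proof.
move=> H; rewrite /dist; case: excluded_middle_informative => [[n Hn]|//].
by move: (H n); rewrite Hn.
Qed.

Lemma dist_some (T : finType) (e : rel T) x y d :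
  dist e x y = Some d -> walkb e x y d /\ (forall n, walkb e x y n -> d <= n).
Proof.
rewrite /dist; case: excluded_middle_informative => [H|//] [<-].
by case: ex_minnP.
Qed.

Lemma dist_none (T : finType) (e : rel T) x y :
  dist e x y = None -> forall n, ~~ walkb e x y n.
Proof.
rewrite /dist; case: excluded_middle_informative => [//|H] _ n.
by apply/negP => Hn; apply: H; exists n.
Qed.

Section S.
Variables (V : finType) (eH : rel V) (l : nat) (eG : rel (V * 'I_l.+1)).
Hypothesis hG : suspended eH l eG.

Lemma lower (p : seq (V * 'I_l.+1)) (u : V * 'I_l.+1) : path eG u p ->
  exists q : seq V, [/\ path eH u.1 q, last u.1 q = (last u p).1 &
    size q + ((last u p).2 - u.2) <= size p /\ size q + (u.2 - (last u p).2) <= size p].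
Proof.
case: hG => _ hsub _ _ _.
elim: p u => [|w p IH] u /=.
  by move=> _; exists [::]; split=> //=; rewrite !subnn.
move/andP=> [Huw Hp]; have [q [Hq Hl [H1 H2]]] := IH w Hp.
move: (hsub _ _ Huw); rewrite /cartP => /orP [/andP [/eqP E Hh] | /andP [/eqP E Hv]].
  exists (w.1 :: q); split => /=; first by rewrite Hh.
    by [].
  rewrite E; lia.
exists q; rewrite E; split=> //.
case/orP: Hv => /eqP Hv; lia.
Qed.

Lemma up y k j : j + k <= l -> exists p : seq (V * 'I_l.+1),
  [/\ size p = k, path eG (y, inord j) p & last (y, inord j) p = (y, inord (j + k))].
Proof.
case: hG => _ _ hv _ _.
elim: k j => [|k IH] j Hjk.
  by exists [::]; rewrite addn0.
have [p [Hs Hp Hl]] := IH j.+1 ltac:(lia).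
exists ((y, inord j.+1) :: p); split=> /=; first by rewrite Hs.
  rewrite Hp andbT; apply: hv; rewrite !inordK //; lia.
by rewrite Hl addSnnS.
Qed.

Lemma down y k j : k <= j <= l -> exists p : seq (V * 'I_l.+1),
  [/\ size p = k, path eG (y, inord j) p & last (y, inord j) p = (y, inord (j - k))].
Proof.
case: hG => hs _ hv _ _.
elim: k j => [|k IH] j Hjk.
  by exists [::]; rewrite subn0.
have [p [Hs Hp Hl]] := IH j.-1 ltac:(lia).
exists ((y, inord j.-1) :: p); split=> /=; first by rewrite Hs.
  rewrite Hp andbT hs; apply: hv; rewrite !inordK //; lia.
rewrite Hl; congr (_, inord _); lia.
Qed.

Lemma horiz (c : 'I_l.+1) (hc : forall x y, eH x y -> eG (x, c) (y, c))
  (x : V) (q : seq V) : path eH x q -> path eG (x, c) (map (fun z => (z, c)) q).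
Proof.
elim: q x => [|z q IH] x //= /andP [Hxz Hq].
by rewrite hc // IH.
Qed.

End S.

Theorem lemma3p2 (V : finType) (eH : rel V) (l : nat) (eG : rel (V * 'I_l.+1))
  (hH : simple_graph eH) (hl : 0 < l) (hG : suspended eH l eG)
  (x y : V) (i : 'I_l.+1) :
  dist eG (x, ord0) (y, i) = omap (addn^~ i) (dist eH x y) /\
  dist eG (x, ord_max) (y, inord (l - i)) = omap (addn^~ i) (dist eH x y).
Proof.
have hi : i <= l by rewrite -ltnS ltn_ord.
have hli : l - i < l.+1 by lia.
case Ed: (dist eH x y) => [d|] /=.
  have [/walkbP [q [Hqs Hq Hql]] Hmin] := @dist_some _ _ _ _ _ Ed.
  case: (hG) => _ _ _ h0 hm.
  split; apply: distE_some.
  - apply/walkbP.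
    have [p [Hs Hp Hl]] := @up _ _ _ _ hG y i 0 ltac:(by rewrite add0n).
    exists (map (fun z => (z, ord0)) q ++ p); split.
    + by rewrite size_cat size_map Hqs Hs.
    + rewrite cat_path (@horiz _ eH) //= last_map Hql.
      by move: Hp; congr (path _ (_, _) _); apply: val_inj; rewrite /= inordK.
    + rewrite last_cat last_map Hql.
      have -> : (ord0 : 'I_l.+1) = inord 0 by apply: val_inj; rewrite /= inordK.
      by rewrite Hl add0n inord_val.
  - move=> n /walkbP [p [Hs Hp Hl]].
    have [q' [Hq' Hl' [H1 H2]]] := @lower _ _ _ _ hG _ _ Hp.
    move: Hl' H1; rewrite Hl /= => Hl' H1.
    have := Hmin (size q'); rewrite (_ : walkb _ _ _ _ = true); last first.
      by apply/walkbP; exists q'.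
    move=> /(_ isT) Hd; move: H1; rewrite /= subn0 -Hs => H; exact: leq_trans (leq_add Hd (leqnn _)) H.
  - apply/walkbP.
    have [p [Hs Hp Hl]] := @down _ _ _ _ hG y i l ltac:(by rewrite hi leqnn).
    exists (map (fun z => (z, ord_max)) q ++ p); split.
    + by rewrite size_cat size_map Hqs Hs.
    + rewrite cat_path (@horiz _ eH) //= last_map Hql.
      by move: Hp; congr (path _ (_, _) _); apply: val_inj; rewrite /= inordK.
    + rewrite last_cat last_map Hql.
      have -> : (ord_max : 'I_l.+1) = inord l by apply: val_inj; rewrite /= inordK.
      by rewrite Hl.
  - move=> n /walkbP [p [Hs Hp Hl]].
    have [q' [Hq' Hl' [H1 H2]]] := @lower _ _ _ _ hG _ _ Hp.
    move: Hl' H2; rewrite Hl /= inordK // => Hl' H2.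
    have := Hmin (size q'); rewrite (_ : walkb _ _ _ _ = true); last first.
      by apply/walkbP; exists q'.
    move=> /(_ isT) Hd; move: H2; rewrite -Hs subKn // => H; exact: leq_trans (leq_add Hd (leqnn _)) H.
have Hn := @dist_none _ _ _ _ Ed.
split; apply: distE_none => n; apply/negP => /walkbP [p [Hs Hp Hl]];
  have [q' [Hq' Hl' _]] := @lower _ _ _ _ hG _ _ Hp;
  move: Hl'; rewrite Hl /= => Hl';
  by move: (Hn (size q')); rewrite (_ : walkb _ _ _ _ = true) //; apply/walkbP; exists q'.
Qed.
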